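(* Let $n \ge 3$ and $2 \le k \le n-1$. Let $A$ be a solution of the $k$-out-of-$(n-1)$ puzzle and $B$ a solution of the $(k-1)$-out-of-$(n-1)$ puzzle, both words on the nails $\{1, \dots, n-1\}$. Then the word \[ A + n + B - A - n \] on the nails $\{1,\dots,n\}$ solves the $k$-out-of-$n$ picture-hanging puzzle.
   Context: Words are elements of the free group on the nails, written additively ($+$ group operation, $-$ inverse, $0$ identity); $n$ in the word denotes the generator for nail $n$. For a nail set $V$ and $S \subseteq V$, $w|_S$ is the image of $w$ under the homomorphism killing the generators in $S$. A solution to the $k$-out-of-$m$ picture-hanging puzzle on a set $V$ of $m$ nails is a word $w$ with $w|_S = 0 \iff |S| \ge k$ for all $S \subseteq V$ (equivalently for $k\ge1$: $w \ne 0$, removing any $k$ nails gives $0$, removing fewer leaves it nonzero). *)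

(* Defs.v *)
From mathcomp Require Import all_boot.
Set Implicit Arguments. Unset Strict Implicit. Unset Printing Implicit Defensive.

(* Elements of the free group on nails (nails are natural numbers), represented
   by words: a letter (a, true) is the generator a, (a, false) its inverse.
   Two words denote the same free-group element iff they have the same free
   reduction [red]. *)
Definition letter := (nat * bool)%type.
Definition word := seq letter.

Fixpoint red (w : word) : word :=
  match w with
  | [::] => [::]
  | x :: w' =>
      match red w' with
      | y :: r => if (y.1 == x.1) && (y.2 != x.2) then r else x :: y :: r
      | [::] => [:: x]
      end
  end.

Definition is_zero (w : word) : bool := red w == [::].

Definition wadd (u v : word) : word := u ++ v.
Definition wneg (u : word) : word := rev [seq (x.1, ~~ x.2) | x <- u].
Definition gen (a : nat) : word := [:: (a, true)].

(* w|_S : image under the homomorphism killing the generators in S *)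
Definition kill (S : seq nat) (w : word) : word := [seq x <- w | x.1 \notin S].

Definition on_nails (V : seq nat) (w : word) : bool := all (fun x => x.1 \in V) w.

Definition solves (k : nat) (V : seq nat) (w : word) : Prop :=
  on_nails V w /\
  forall S : seq nat, uniq S -> {subset S <= V} ->
    (is_zero (kill S w) <-> k <= size S).

Definition nails (m : nat) : seq nat := iota 1 m.

(* Main.v *)
Require Import Defs.
From mathcomp Require Import all_boot.
From mathcomp Require Import zify.

Definition cancels (x y : letter) : bool := (y.1 == x.1) && (y.2 != x.2).
Definition step (x : letter) (r : word) : word :=
  match r with y :: r' => if cancels x y then r' else x :: y :: r' | [::] => [:: x] end.
Definition act (u r : word) : word := foldr step r u.
Definition inv (x : letter) : letter := (x.1, ~~ x.2).

Fixpoint reduced (w : word) : bool :=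
  match w with
  | x :: w' => match w' with y :: _ => ~~ cancels x y && reduced w' | [::] => true end
  | [::] => true
  end.

Lemma reduced_cons2 x y r : reduced [:: x, y & r] = ~~ cancels x y && reduced (y :: r).
Proof. by []. Qed.

Lemma reduced_tail x r : reduced (x :: r) -> reduced r.
Proof. by case: r => // y r; rewrite reduced_cons2 => /andP[]. Qed.

Lemma red_cons x w : red (x :: w) = step x (red w).
Proof. by rewrite /=; case: (red w). Qed.

Lemma red_act w : red w = act w [::].
Proof. by elim: w => //= x w IH; rewrite red_cons IH. Qed.

Lemma act_cat u v r : act (u ++ v) r = act u (act v r).
Proof. by rewrite /act foldr_cat. Qed.

Lemma act_cons x u r : act (x :: u) r = step x (act u r).
Proof. by []. Qed.

Lemma act_nil r : act [::] r = r.
Proof. by []. Qed.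

Lemma step_red x r : reduced r -> reduced (step x r).
Proof.
case: r => [|y r] // H; rewrite /step; case: ifP => C.
- exact: reduced_tail H.
- by rewrite reduced_cons2 C H.
Qed.

Lemma act_reduced u r : reduced r -> reduced (act u r).
Proof. by elim: u => //= x u IH H; apply: step_red; apply: IH. Qed.

Lemma invK x : inv (inv x) = x.
Proof. by case: x => a b; rewrite /inv /= negbK. Qed.

Lemma stepK x r : reduced r -> step (inv x) (step x r) = r.
Proof.
case: x => a b; case: r => [|y r] H.
  by rewrite /= /cancels /inv /= eqxx; case: b.
rewrite /step; case: ifP => C.
- case: y C H => c d; rewrite /cancels /= => /andP[/eqP -> db].
  have -> : d = ~~ b by case: b d db => [] [].
  case: r => [|z r]; first by [].
  move=> /andP[nc _].
  by move: nc; rewrite /cancels /= => /negbTE ->.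
- by rewrite /cancels /inv /= eqxx; case: b C.
Qed.

Lemma stepKV x r : reduced r -> step x (step (inv x) r) = r.
Proof. by move=> H; have := @stepK (inv x) r H; rewrite invK. Qed.

Lemma step_act x s r : reduced r -> step x (act s r) = act (step x s) r.
Proof.
move=> Hr; case: s => [|y s] //=.
case: ifP => C //.
have -> : y = inv x.
  by case: x y C => a b [c d]; rewrite /cancels /inv /= => /andP[/eqP -> ]; case: b; case: d.
by rewrite stepKV //; apply: act_reduced.
Qed.

Lemma act_redE u r : reduced r -> act u r = act (red u) r.
Proof.
move=> Hr; elim: u => // x u IH.
by rewrite act_cons red_cons IH step_act.
Qed.

Lemma wneg_cons x u : wneg (x :: u) = wneg u ++ [:: inv x].
Proof. by rewrite /wneg /= rev_cons -cats1. Qed.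

Lemma actK u r : reduced r -> act u (act (wneg u) r) = r.
Proof.
elim: u r => // x u IH r Hr.
rewrite wneg_cons act_cat act_cons act_cons act_nil IH ?stepKV //; exact: step_red.
Qed.

Lemma actKV u r : reduced r -> act (wneg u) (act u r) = r.
Proof.
elim: u r => // x u IH r Hr.
by rewrite wneg_cons act_cat act_cons act_cons act_nil stepK ?IH //; apply: act_reduced.
Qed.

Lemma red_reduced w : reduced (red w).
Proof. by rewrite red_act; apply: act_reduced. Qed.

Lemma act_fresh x t u : all (fun y => y.1 != x.1) u -> act u (x :: t) = red u ++ x :: t.
Proof.
elim: u => // y u IH /andP[yx Hu].
rewrite act_cons IH // red_cons; case: (red u) => [|z r].
- by rewrite /= /cancels eq_sym (negbTE yx).
- by rewrite /=; case: ifP.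
Qed.

Lemma all_red (P : pred letter) w : all P w -> all P (red w).
Proof.
elim: w => // x w IH /andP[Px Hw]; rewrite red_cons.
move: (IH Hw); case: (red w) => [|y r] /=; first by rewrite Px.
by case/andP=> Py Hr; case: ifP => _ //=; rewrite Px Py Hr.
Qed.

Lemma all_wneg (P : pred letter) u : (forall y, P (y.1, ~~ y.2) = P y) -> all P (wneg u) = all P u.
Proof. by move=> HP; rewrite /wneg all_rev all_map; apply: eq_all => y /=; rewrite HP. Qed.

Lemma kill_wneg S u : kill S (wneg u) = wneg (kill S u).
Proof. by rewrite /kill /wneg filter_rev filter_map. Qed.

Lemma act_zero u r : red u = [::] -> reduced r -> act u r = r.
Proof. by move=> H Hr; rewrite act_redE // H. Qed.

Lemma conj_zero a b : is_zero (a ++ b ++ wneg a) = is_zero b.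
Proof.
rewrite /is_zero !red_act !act_cat.
have r0 : reduced [::] by [].
set r := act (wneg a) [::].
have Hr : reduced r by apply: act_reduced.
apply/eqP/eqP => H.
- have E : act b r = r.
    by rewrite -[act b r](actKV a) ?H //; apply: act_reduced.
  transitivity (act b (act (wneg a) (act a [::]))); first by rewrite actKV.
  rewrite -act_cat (act_redE (b ++ wneg a)); last exact: act_reduced.
  rewrite red_act act_cat E /r -red_act -act_redE; last exact: act_reduced.
  exact: actKV.
- by rewrite (act_zero b) ?red_act // /r actK.
Qed.

Lemma comm_zero a b x : is_zero a -> is_zero b ->
  is_zero (a ++ x :: b ++ wneg a ++ [:: inv x]).
Proof.
rewrite /is_zero => /eqP Ha /eqP Hb.
have r1 : reduced [:: inv x] by [].
rewrite red_act act_cat act_cons act_cat act_cat.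
have E : act (wneg a) [:: inv x] = [:: inv x].
  by rewrite -{1}(act_zero _ _ Ha r1) actKV.
rewrite E (act_zero _ _ Hb r1).
have -> : step x [:: inv x] = [::].
  by rewrite /step /cancels /inv /= eqxx /=; case: x.2.
by rewrite act_zero.
Qed.

Lemma comm_nz a b x : all (fun y => y.1 != x.1) a -> all (fun y => y.1 != x.1) b ->
  ~~ is_zero a -> ~~ is_zero (a ++ x :: b ++ wneg a ++ [:: inv x]).
Proof.
move=> Ha Hb nz.
have Hba : all (fun y => y.1 != x.1) (b ++ wneg a).
  by rewrite all_cat Hb all_wneg.
rewrite /is_zero red_act act_cat act_cons catA act_cat (act_fresh (inv x) _ _ Hba).
move: (all_red _ _ Hba); case: (red (b ++ wneg a)) => [|z c].
- move=> _; rewrite /= /cancels /inv /= eqxx.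
  by case: x.2 => /=; rewrite -red_act.
- move=> /= /andP[zx _]; rewrite /cancels (negbTE zx) /= (act_fresh _ _ _ Ha).
  by case: (red a).
Qed.

Theorem proposition4 (n k : nat) (A B : word) :
  3 <= n -> 2 <= k -> k <= n - 1 ->
  solves k (nails (n - 1)) A ->
  solves (k - 1) (nails (n - 1)) B ->
  solves k (nails n)
    (wadd A (wadd (gen n) (wadd B (wadd (wneg A) (wneg (gen n)))))).
Proof.
move=> n3 k2 kn [onA HA] [onB HB].
have nV : forall a, a \in nails (n - 1) -> a < n.
  by move=> a; rewrite mem_iota; lia.
have Vn : forall a, a \in nails (n - 1) -> a \in nails n.
  by move=> a; rewrite !mem_iota; lia.
split.
  have aw : forall u, all (fun x : letter => x.1 \in nails n) (wneg u) =
      all (fun x : letter => x.1 \in nails n) u by move=> u; apply: all_wneg.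
  have sA : all (fun x : letter => x.1 \in nails n) A.
    by apply: sub_all onA => y /Vn.
  have sB : all (fun x : letter => x.1 \in nails n) B.
    by apply: sub_all onB => y /Vn.
  have nn : n \in nails n by rewrite mem_iota; lia.
  rewrite /on_nails /wadd !all_cat !aw sA sB /= nn.
  by [].
move=> S uS sS.
have fA : forall y, y \in A -> y.1 != n.
  by move=> y /(allP onA) /nV /ltn_eqF ->.
have fB : forall y, y \in B -> y.1 != n.
  by move=> y /(allP onB) /nV /ltn_eqF ->.
rewrite /wadd /kill !filter_cat -!/(kill S _) !kill_wneg.
case nS: (n \in S).
- set S' := [seq s <- S | s != n].
  have uS' : uniq S' by apply: filter_uniq.
  have sS' : {subset S' <= nails (n - 1)}.
    move=> a; rewrite mem_filter => /andP[an /sS]; rewrite !mem_iota; lia.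
  have kE : forall w, (forall y, y \in w -> y.1 != n) -> kill S w = kill S' w.
    move=> w Hw; rewrite /kill; apply: eq_in_filter => y /Hw yn.
    by rewrite mem_filter yn.
  have sz : size S = (size S').+1.
    rewrite size_filter -(count_predC (pred1 n)) (count_uniq_mem _ uS) nS addnC.
    by rewrite addn1.
  have -> : kill S (gen n) = [::] by rewrite /kill /gen /= nS.
  rewrite cat0s (_ : wneg [::] = [::]) // cats0 (kE A) // (kE B) //.
  rewrite conj_zero (HB _ uS' sS') sz leq_subLR add1n.
  done.
- have sS0 : {subset S <= nails (n - 1)}.
    move=> a aS; have := sS a aS; rewrite !mem_iota.
    have : a != n by apply/eqP => E; move: nS; rewrite -E aS.
    lia.
  have -> : kill S (gen n) = [:: (n, true)] by rewrite /kill /gen /= nS.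
  have -> : wneg [:: (n, true)] = [:: inv (n, true)] by [].
  rewrite cat1s.
  have fk : forall w, (forall y, y \in w -> y.1 != n) ->
      all (fun y => y.1 != (n, true).1) (kill S w).
    by move=> w Hw; apply/allP => y; rewrite mem_filter => /andP[_ /Hw].
  split.
  + move=> Z; case: (leqP k (size S)) => // lt.
    have nz : ~~ is_zero (kill S A).
      by apply/negP => /(HA _ uS sS0); lia.
    by move: (comm_nz (kill S A) (kill S B) (n, true) (fk _ fA) (fk _ fB) nz); rewrite Z.
  + move=> le; apply: comm_zero.
    * by apply/(HA _ uS sS0).
    * by apply/(HB _ uS sS0); lia.
Qed.
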